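(* Let $f:\Omega_D\to\mathbb{O}$ be a slice function of class $C^1$, $\mathbb I=(I,J)\in\mathcal N$, and assume $D$ is bounded with boundary of class $C^1$. Define $Q_I,M_I:\mathbb{O}^3\to\mathbb{O}$ and $N_I:\mathbb{O}^2\to\mathbb{O}$ by $Q_I(x,\xi,a)=(|x|^2+|\xi|^2)^2a-2(|x|^2+|\xi|^2)\big(x(\xi_Ia)+\overline x(\overline{\xi_I}a)\big)+x^2(\xi_I^2a)+\overline x^2(\overline{\xi_I}^2a)+2|x|^2|\xi_I|^2a$, $M_I(x,\xi,a)=Q_I(x,\xi,\overline\xi a)-\overline x\,Q_I(x,\xi,a)$, $N_I(x,\xi)=|\Delta_{\xi_I}(x)|^2+2|\xi_I^\perp|^2\big(|x|^2-2\mathrm{Re}(x)\mathrm{Re}(\xi_I)+|\xi_I|^2\big)+|\xi_I^\perp|^4$. Then the zero set of $N_I$ equals $\Gamma_I$, and $S_{f,\mathbb I}(x,\xi)=\dfrac{M_I(x,\xi,\mathtt n_{\mathbb I}(\xi)f(\xi))}{2\pi^2N_I(x,\xi)^2}$ for all $(x,\xi)\in\partial^*\Omega_{\mathbb I}$, and $V_{f,\mathbb I}(x,\xi)=\dfrac{M_I(x,\xi,\overline{\mathcal D}_{\mathbb I}f(\xi))}{2\pi^2N_I(x,\xi)^2}$ for all $(x,\xi)\in\Omega^*_{\mathbb I}$.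
   Context: Octonions $\mathbb{O}=\mathbb{H}+\ell\mathbb{H}$ (product $(a+\ell b)(c+\ell d)=(ac-d\bar b)+\ell(\bar a d+cb)$, conjugation $\overline{a+\ell b}=\bar a-\ell b$), identified with $\mathbb{R}^8$; $\mathrm{Re},\mathrm{Im}$ real and imaginary parts; $\mathbb S=\{I:I^2=-1\}$; $\mathbb C_I=\mathrm{Span}(1,I)$; $\mathcal N=\{(I,J)\in\mathbb S^2:I\perp J\}$; $\mathbb H_{\mathbb I}=\mathrm{Span}(1,I,J,IJ)$. $D\subset\mathbb{R}^2$ non-empty open, invariant under $(\alpha,\beta)\mapsto(\alpha,-\beta)$, $\Omega_D=\{\alpha+\beta K:(\alpha,\beta)\in D,K\in\mathbb S\}$, assumed connected; $E=\{(x_0,\dots,x_3):(x_0,(x_1^2+x_2^2+x_3^2)^{1/2})\in D\}$. Slice functions: $f(\alpha+\beta K)=F_1(\alpha,\beta)+KF_2(\alpha,\beta)$ with stem $(F_1,F_2)$, $F_1$ even and $F_2$ odd in $\beta$ (also on other circular domains such as $\mathbb{O}\setminus\mathbb S_{I,\xi}$). Slice product: stems multiply by $(F_1,F_2)(G_1,G_2)=(F_1G_1-F_2G_2,F_1G_2+F_2G_1)$; $f^c$ induced by $(\overline{F_1},\overline{F_2})$; $N(f)=f\cdot f^c$ (its stem is real-valued... i.e. it is slice preserving, and $x\mapsto N(f)(x)^{-2}$ is again slice). $\Delta_\eta(x)=x^2-2x\mathrm{Re}\,\eta+|\eta|^2$, $\mathbb S_\eta=\{\mathrm{Re}\,\eta+K|\mathrm{Im}\,\eta|:K\in\mathbb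 S\}$. For $\xi\in\mathbb{O}$: $\xi_I$ orthogonal projection onto $\mathbb C_I$, $\xi_I^\perp=\xi-\xi_I$, $g_{I,\xi}(x)=|x|^2-x\overline{\xi_I}-\overline x\xi_I+|\xi|^2$ (slice function), $\mathbb S_{I,\xi}=\mathbb S_\xi$ if $\xi\in\mathbb C_I$ and $\emptyset$ otherwise; $N(g_{I,\xi})$ vanishes exactly on $\mathbb S_{I,\xi}$. $\Gamma_I=\{(x,\xi)\in\mathbb{O}^2:\xi\in\mathbb C_I,x\in\mathbb S_\xi\}$. $\Omega_{\mathbb I}=\Omega_D\cap\mathbb H_{\mathbb I}$ (bounded with $C^1$ boundary $\partial\Omega_{\mathbb I}$ in $\mathbb H_{\mathbb I}$), $\mathtt n_{\mathbb I}$ its outer unit normal in $\mathbb H_{\mathbb I}$. $\partial^*\Omega_{\mathbb I}=(\mathbb{O}^2\setminus\Gamma_I)\cap(\mathbb{O}\times\partial\Omega_{\mathbb I})$, $\Omega^*_{\mathbb I}=(\mathbb{O}^2\setminus\Gamma_I)\cap(\mathbb{O}\times\Omega_{\mathbb I})$. With $f_{\mathbb I}(v)=f(x_0+x_1I+x_2J+x_3IJ)$, $\overline{\mathcal D}_{\mathbb I}f(\xi)=\partial_0f_{\mathbb I}+I\partial_1f_{\mathbb I}+J\partial_2f_{\mathbb I}+(IJ)\partial_3f_{\mathbb I}$ evaluated at the coordinates of $\xi$. For fixed $\xi$ and a constant $a\in\mathbb{O}$ let $h_{\xi,a}$ be the slice function $x\mapsto(\overline\xi-\overline x)a$; then $S_{f,\mathbb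 I}(x,\xi)$ (for $\xi\in\partial\Omega_{\mathbb I}$, $x\notin\mathbb S_{I,\xi}$) is the value at $x$ of the slice function $\frac1{2\pi^2}N(g_{I,\xi})^{-2}\cdot\big((g^c_{I,\xi}\cdot g^c_{I,\xi})\cdot h_{\xi,a}\big)$ with $a=\mathtt n_{\mathbb I}(\xi)f(\xi)$, and $V_{f,\mathbb I}(x,\xi)$ (for $\xi\in\Omega_{\mathbb I}$) is the same with $a=\overline{\mathcal D}_{\mathbb I}f(\xi)$. *)

(* Defs.v *)
From Stdlib Require Import Reals Lra.
From Coquelicot Require Import Coquelicot.
Open Scope R_scope.

(** * Quaternions H = R^4 (basis 1,i,j,k) *)
Record quat := Qt { q0 : R; q1 : R; q2 : R; q3 : R }.

Definition qadd (a b : quat) : quat :=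
  Qt (q0 a + q0 b) (q1 a + q1 b) (q2 a + q2 b) (q3 a + q3 b).
Definition qopp (a : quat) : quat := Qt (- q0 a) (- q1 a) (- q2 a) (- q3 a).
Definition qsub (a b : quat) : quat := qadd a (qopp b).
Definition qmul (a b : quat) : quat :=
  Qt (q0 a * q0 b - q1 a * q1 b - q2 a * q2 b - q3 a * q3 b)
     (q0 a * q1 b + q1 a * q0 b + q2 a * q3 b - q3 a * q2 b)
     (q0 a * q2 b - q1 a * q3 b + q2 a * q0 b + q3 a * q1 b)
     (q0 a * q3 b + q1 a * q2 b - q2 a * q1 b + q3 a * q0 b).
Definition qconj (a : quat) : quat := Qt (q0 a) (- q1 a) (- q2 a) (- q3 a).
Definition qzero : quat := Qt 0 0 0 0.

(** * Octonions O = H + l H, the pair (a,b) standing for a + l b *)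
Record oct := Oc { ol : quat; or : quat }.

Definition oadd (x y : oct) : oct := Oc (qadd (ol x) (ol y)) (qadd (or x) (or y)).
Definition oopp (x : oct) : oct := Oc (qopp (ol x)) (qopp (or x)).
Definition osub (x y : oct) : oct := oadd x (oopp y).
(* (a + l b)(c + l d) = (ac - d conj(b)) + l (conj(a) d + c b) *)
Definition omul (x y : oct) : oct :=
  Oc (qsub (qmul (ol x) (ol y)) (qmul (or y) (qconj (or x))))
     (qadd (qmul (qconj (ol x)) (or y)) (qmul (ol y) (or x))).
Definition oconj (x : oct) : oct := Oc (qconj (ol x)) (qopp (or x)).

Definition mk8 (c : nat -> R) : oct :=
  Oc (Qt (c 0%nat) (c 1%nat) (c 2%nat) (c 3%nat))
     (Qt (c 4%nat) (c 5%nat) (c 6%nat) (c 7%nat)).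
Definition ocoord (k : nat) (x : oct) : R :=
  match k with
  | 0%nat => q0 (ol x) | 1%nat => q1 (ol x) | 2%nat => q2 (ol x) | 3%nat => q3 (ol x)
  | 4%nat => q0 (or x) | 5%nat => q1 (or x) | 6%nat => q2 (or x) | 7%nat => q3 (or x)
  | _ => 0 end.
Definition obasis (k : nat) : oct := mk8 (fun i => if Nat.eqb i k then 1 else 0).

Definition oR (r : R) : oct := Oc (Qt r 0 0 0) qzero.
Definition oscal (r : R) (x : oct) : oct :=
  Oc (Qt (r * q0 (ol x)) (r * q1 (ol x)) (r * q2 (ol x)) (r * q3 (ol x)))
     (Qt (r * q0 (or x)) (r * q1 (or x)) (r * q2 (or x)) (r * q3 (or x))).
Definition ozero : oct := oR 0.
Definition oone : oct := oR 1.

Definition odot (x y : oct) : R :=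
  q0 (ol x) * q0 (ol y) + q1 (ol x) * q1 (ol y) + q2 (ol x) * q2 (ol y) + q3 (ol x) * q3 (ol y)
  + q0 (or x) * q0 (or y) + q1 (or x) * q1 (or y) + q2 (or x) * q2 (or y) + q3 (or x) * q3 (or y).
Definition onorm2 (x : oct) : R := odot x x.
Definition onorm (x : oct) : R := sqrt (onorm2 x).

Definition oRe (x : oct) : R := q0 (ol x).
Definition oIm (x : oct) : oct := osub x (oR (oRe x)).

Definition osph (K : oct) : Prop := omul K K = oR (-1).
Definition Npairs (I J : oct) : Prop := osph I /\ osph J /\ odot I J = 0.

Definition inCI (I x : oct) : Prop := exists a b : R, x = oadd (oR a) (oscal b I).
Definition inHI (I J x : oct) : Prop :=
  exists a b c d : R,
    x = oadd (oadd (oR a) (oscal b I)) (oadd (oscal c J) (oscal d (omul I J))).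

(* orthogonal projection onto C_I (1 and I are orthonormal for I in S) *)
Definition projI (I xi : oct) : oct := oadd (oR (odot xi oone)) (oscal (odot xi I) I).
Definition projIperp (I xi : oct) : oct := osub xi (projI I xi).

Definition Delta (eta x : oct) : oct :=
  oadd (osub (omul x x) (oscal (2 * oRe eta) x)) (oR (onorm2 eta)).
Definition Ssph (eta x : oct) : Prop :=
  exists K, osph K /\ x = oadd (oR (oRe eta)) (oscal (onorm (oIm eta)) K).
Definition GammaI (I x xi : oct) : Prop := inCI I xi /\ Ssph xi x.

Definition QI (I x xi a : oct) : oct :=
  let s := onorm2 x + onorm2 xi in
  let xiI := projI I xi in
  oadd (osub (oscal (s ^ 2) a)
             (oscal (2 * s) (oadd (omul x (omul xiI a))
                                  (omul (oconj x) (omul (oconj xiI) a)))))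
       (oadd (oadd (omul (omul x x) (omul (omul xiI xiI) a))
                   (omul (omul (oconj x) (oconj x))
                         (omul (omul (oconj xiI) (oconj xiI)) a)))
             (oscal (2 * onorm2 x * onorm2 xiI) a)).

Definition MI (I x xi a : oct) : oct :=
  osub (QI I x xi (omul (oconj xi) a)) (omul (oconj x) (QI I x xi a)).

Definition NI (I x xi : oct) : R :=
  let xiI := projI I xi in
  let p := onorm2 (projIperp I xi) in
  onorm2 (Delta xiI x)
  + 2 * p * (onorm2 x - 2 * oRe x * oRe xiI + onorm2 xiI)
  + p ^ 2.

(** * Slice functions, stems, slice product *)
Definition stem := R -> R -> oct * oct.

(* the slice function induced by a stem:
   alpha + beta K |-> F1(alpha,beta) + K F2(alpha,beta), with beta = |Im x|,
   K = Im x / |Im x| (when Im x = 0, F2(alpha,0) = 0 for odd stems) *)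
Definition induced (F : stem) (x : oct) : oct :=
  let al := oRe x in
  let be := onorm (oIm x) in
  let K := oscal (/ be) (oIm x) in
  oadd (fst (F al be)) (omul K (snd (F al be))).

(* fixed imaginary unit used to recover the stem of a slice function *)
Definition e1 : oct := Oc (Qt 0 1 0 0) qzero.

Definition stem_of (f : oct -> oct) : stem := fun al be =>
  let p := f (oadd (oR al) (oscal be e1)) in
  let m := f (osub (oR al) (oscal be e1)) in
  (oscal (/2) (oadd p m), oscal (- / 2) (omul e1 (osub p m))).

Definition stem_mul (F G : stem) : stem := fun al be =>
  let '(F1, F2) := F al be in
  let '(G1, G2) := G al be in
  (osub (omul F1 G1) (omul F2 G2), oadd (omul F1 G2) (omul F2 G1)).
Definition stem_conj (F : stem) : stem := fun al be =>
  let '(F1, F2) := F al be in (oconj F1, oconj F2).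

Definition slice_mul (f g : oct -> oct) : oct -> oct :=
  induced (stem_mul (stem_of f) (stem_of g)).
Definition slice_conj (f : oct -> oct) : oct -> oct :=
  induced (stem_conj (stem_of f)).
Definition sliceN (f : oct -> oct) : oct -> oct := slice_mul f (slice_conj f).

Definition oinv (x : oct) : oct := oscal (/ onorm2 x) (oconj x).
Definition oinvsq (x : oct) : oct := omul (oinv x) (oinv x).

Definition gIxi (I xi : oct) (x : oct) : oct :=
  oadd (osub (osub (oR (onorm2 x)) (omul x (oconj (projI I xi))))
             (omul (oconj x) (projI I xi)))
       (oR (onorm2 xi)).
Definition hxia (xi a : oct) (x : oct) : oct := omul (osub (oconj xi) (oconj x)) a.

Definition kernel (I xi a : oct) (x : oct) : oct :=
  let g := gIxi I xi in
  oscal (/ (2 * PI ^ 2))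
    (slice_mul (fun y => oinvsq (sliceN g y))
               (slice_mul (slice_mul (slice_conj g) (slice_conj g)) (hxia xi a)) x).

Definition Rball2 (p q : R * R) (r : R) : Prop :=
  (fst q - fst p) ^ 2 + (snd q - snd p) ^ 2 < r ^ 2.
Definition OmegaD (D : R -> R -> Prop) (x : oct) : Prop :=
  exists al be K, D al be /\ osph K /\ x = oadd (oR al) (oscal be K).

Definition open_R2 (D : R -> R -> Prop) : Prop :=
  forall a b, D a b -> exists r, 0 < r /\
    forall c d, Rball2 (a, b) (c, d) r -> D c d.
Definition open_O (U : oct -> Prop) : Prop :=
  forall x, U x -> exists r, 0 < r /\ forall y, onorm (osub y x) < r -> U y.
Definition connected_O (A : oct -> Prop) : Prop :=
  forall U V, open_O U -> open_O V -> (forall x, A x -> U x \/ V x) ->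
    (forall x, ~ (A x /\ U x /\ V x)) ->
    (forall x, ~ (A x /\ U x)) \/ (forall x, ~ (A x /\ V x)).
Definition bounded_R2 (D : R -> R -> Prop) : Prop :=
  exists M, forall a b, D a b -> a ^ 2 + b ^ 2 <= M.

Definition boundary_R2 (D : R -> R -> Prop) (a b : R) : Prop :=
  ~ D a b /\ forall e, 0 < e -> exists c d, D c d /\ Rball2 (a, b) (c, d) e.

(* D has C^1 boundary: local C^1 defining functions with non-vanishing gradient *)
Definition C1_boundary_R2 (D : R -> R -> Prop) : Prop :=
  forall a b, boundary_R2 D a b -> exists r (rho : R -> R -> R), 0 < r /\
    (forall c d, Rball2 (a, b) (c, d) r ->
       ex_derive (fun t => rho t d) c /\ ex_derive (fun t => rho c t) d) /\
    (forall c d, Rball2 (a, b) (c, d) r -> forall e, 0 < e -> exists dl, 0 < dl /\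
       forall c' d', Rball2 (a, b) (c', d') r -> Rball2 (c, d) (c', d') dl ->
         Rabs (Derive (fun t => rho t d') c' - Derive (fun t => rho t d) c) < e /\
         Rabs (Derive (fun t => rho c' t) d' - Derive (fun t => rho c t) d) < e) /\
    (Derive (fun t => rho t b) a <> 0 \/ Derive (fun t => rho a t) b <> 0) /\
    (forall c d, Rball2 (a, b) (c, d) r -> (D c d <-> rho c d < 0)).

Definition slice_on (D : R -> R -> Prop) (f : oct -> oct) : Prop :=
  exists F1 F2 : R -> R -> oct,
    (forall a b, D a b -> F1 a (- b) = F1 a b /\ F2 a (- b) = oopp (F2 a b)) /\
    (forall a b K, D a b -> osph K ->
       f (oadd (oR a) (oscal b K)) = oadd (F1 a b) (omul K (F2 a b))).

Definition oderiv (f : oct -> oct) (x u : oct) : oct :=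
  mk8 (fun k => Derive (fun t => ocoord k (f (oadd x (oscal t u)))) 0).
Definition oderivable (f : oct -> oct) (x u : oct) : Prop :=
  forall k, (k < 8)%nat -> ex_derive (fun t => ocoord k (f (oadd x (oscal t u)))) 0.

Definition C1_on (U : oct -> Prop) (f : oct -> oct) : Prop :=
  forall k, (k < 8)%nat ->
    (forall x, U x -> oderivable f x (obasis k)) /\
    (forall x, U x -> forall e, 0 < e -> exists d, 0 < d /\
       forall y, U y -> onorm (osub y x) < d ->
         onorm (osub (oderiv f y (obasis k)) (oderiv f x (obasis k))) < e).

Definition OmegaI (D : R -> R -> Prop) (I J x : oct) : Prop := OmegaD D x /\ inHI I J x.
Definition boundaryI (D : R -> R -> Prop) (I J xi : oct) : Prop :=
  inHI I J xi /\ ~ OmegaI D I J xi /\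
  forall e, 0 < e -> exists y, OmegaI D I J y /\ onorm (osub y xi) < e.

Definition ebasI (I J : oct) (k : nat) : oct :=
  match k with 0%nat => oone | 1%nat => I | 2%nat => J | _ => omul I J end.

Definition rderiv (rho : oct -> R) (y u : oct) : R := Derive (fun t => rho (oadd y (oscal t u))) 0.
Definition gradI (I J : oct) (rho : oct -> R) (y : oct) : oct :=
  oadd (oadd (oscal (rderiv rho y (ebasI I J 0)) (ebasI I J 0))
             (oscal (rderiv rho y (ebasI I J 1)) (ebasI I J 1)))
       (oadd (oscal (rderiv rho y (ebasI I J 2)) (ebasI I J 2))
             (oscal (rderiv rho y (ebasI I J 3)) (ebasI I J 3))).

(* n is the outer unit normal of Omega_I (in H_I): at each boundary point there
   is a local C^1 defining function rho (Omega_I = {rho < 0} near xi, with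
   nonzero gradient) and n(xi) = grad rho(xi) / |grad rho(xi)| *)
Definition outer_unit_normal (D : R -> R -> Prop) (I J : oct) (n : oct -> oct) : Prop :=
  forall xi, boundaryI D I J xi -> exists r (rho : oct -> R), 0 < r /\
    (forall y, inHI I J y -> onorm (osub y xi) < r -> forall k, (k < 4)%nat ->
       ex_derive (fun t => rho (oadd y (oscal t (ebasI I J k)))) 0) /\
    (forall y, inHI I J y -> onorm (osub y xi) < r -> forall e, 0 < e ->
       exists d, 0 < d /\ forall y', inHI I J y' -> onorm (osub y' xi) < r ->
         onorm (osub y' y) < d -> onorm (osub (gradI I J rho y') (gradI I J rho y)) < e) /\
    gradI I J rho xi <> ozero /\
    (forall y, inHI I J y -> onorm (osub y xi) < r -> (OmegaI D I J y <-> rho y < 0)) /\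
    n xi = oscal (/ onorm (gradI I J rho xi)) (gradI I J rho xi).

Definition DbarI (I J : oct) (f : oct -> oct) (xi : oct) : oct :=
  oadd (oadd (oderiv f xi oone) (omul I (oderiv f xi I)))
       (oadd (omul J (oderiv f xi J)) (omul (omul I J) (oderiv f xi (omul I J)))).

Definition SfI (I : oct) (n f : oct -> oct) (x xi : oct) : oct :=
  kernel I xi (omul (n xi) (f xi)) x.
Definition VfI (I J : oct) (f : oct -> oct) (x xi : oct) : oct :=
  kernel I xi (DbarI I J f xi) x.

(* Main.v *)
Require Import Defs.
From Stdlib Require Import Reals.
From Coquelicot Require Import Coquelicot.
From Stdlib Require Import Lra Psatz.
Open Scope R_scope.


Lemma oct_ext (x y : oct) :
  q0 (ol x) = q0 (ol y) -> q1 (ol x) = q1 (ol y) -> q2 (ol x) = q2 (ol y) -> q3 (ol x) = q3 (ol y) ->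
  q0 (or x) = q0 (or y) -> q1 (or x) = q1 (or y) -> q2 (or x) = q2 (or y) -> q3 (or x) = q3 (or y) ->
  x = y.
Proof. destruct x as [[] []], y as [[] []]; simpl; intros; subst; reflexivity. Qed.

Ltac ounf := cbv beta iota delta [oIm oRe osub qsub oadd oopp oscal oR omul oconj qadd qopp qmul
  qconj qzero e1 oone ozero onorm2 odot q0 q1 q2 q3 ol or fst snd] in *.
Ltac pr := idtac.
Ltac octr := intros; apply oct_ext; ounf; ring.

Lemma omul_addl x y z : omul (oadd x y) z = oadd (omul x z) (omul y z). Proof. octr. Qed.
Lemma omul_addr x y z : omul z (oadd x y) = oadd (omul z x) (omul z y). Proof. octr. Qed.
Lemma omul_subl x y z : omul (osub x y) z = osub (omul x z) (omul y z). Proof. octr. Qed.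
Lemma omul_subr x y z : omul z (osub x y) = osub (omul z x) (omul z y). Proof. octr. Qed.
Lemma omul_oppl x z : omul (oopp x) z = oopp (omul x z). Proof. octr. Qed.
Lemma omul_oppr x z : omul z (oopp x) = oopp (omul z x). Proof. octr. Qed.
Lemma omul_scall r x y : omul (oscal r x) y = oscal r (omul x y). Proof. octr. Qed.
Lemma omul_scalr r x y : omul x (oscal r y) = oscal r (omul x y). Proof. octr. Qed.
Lemma omul_oRl r y : omul (oR r) y = oscal r y. Proof. octr. Qed.
Lemma omul_oRr r y : omul y (oR r) = oscal r y. Proof. octr. Qed.
Lemma omul_0l y : omul ozero y = ozero. Proof. octr. Qed.
Lemma omul_0r y : omul y ozero = ozero. Proof. octr. Qed.
Lemma oconj_add x y : oconj (oadd x y) = oadd (oconj x) (oconj y). Proof. octr. Qed.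
Lemma oconj_sub x y : oconj (osub x y) = osub (oconj x) (oconj y). Proof. octr. Qed.
Lemma oconj_opp x : oconj (oopp x) = oopp (oconj x). Proof. octr. Qed.
Lemma oconj_scal r x : oconj (oscal r x) = oscal r (oconj x). Proof. octr. Qed.
Lemma oconj_oR r : oconj (oR r) = oR r. Proof. octr. Qed.
Lemma alt_l x y : omul x (omul x y) = omul (omul x x) y. Proof. octr. Qed.
Lemma oscal_oscal r s x : oscal r (oscal s x) = oscal (r * s) x. Proof. octr. Qed.
Lemma oscal_1 x : oscal 1 x = x. Proof. octr. Qed.
Lemma oscal_0 r : oscal r ozero = ozero. Proof. octr. Qed.
Lemma oadd_0 x : oadd x ozero = x. Proof. octr. Qed.

Lemma imag_sq X : oRe X = 0 -> omul X X = oR (- onorm2 X).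
Proof. destruct X as [[a b c d] [e f g h]]; intro H; ounf; pr; subst; apply oct_ext; ounf; ring. Qed.
Lemma conj_im X : oRe X = 0 -> oconj X = oopp X.
Proof. destruct X as [[a b c d] [e f g h]]; intro H; ounf; pr; subst; apply oct_ext; ounf; ring. Qed.

Lemma oRe_oIm x : oRe (oIm x) = 0. Proof. ounf; pr; ring. Qed.
Lemma x_decomp x : x = oadd (oR (oRe x)) (oIm x). Proof. octr. Qed.
Lemma oconj_decomp x : oconj x = osub (oR (oRe x)) (oIm x). Proof. octr. Qed.
Lemma onorm2_decomp x : onorm2 x = oRe x * oRe x + onorm2 (oIm x). Proof. ounf; pr; ring. Qed.

Lemma onorm2_nonneg x : 0 <= onorm2 x. Proof. ounf; nra. Qed.
Lemma onorm2_0 x : onorm2 x = 0 -> x = ozero.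
Proof. destruct x as [[a b c d] [e f g h]]; ounf; pr; intro H; apply oct_ext; ounf; nra. Qed.


Lemma osph_props I : osph I -> oRe I = 0 /\ onorm2 I = 1.
Proof.
  destruct I as [[a b c d] [e f g h]]; unfold osph; intro H.
  assert (H0 := f_equal (fun z => q0 (ol z)) H).
  assert (H1 := f_equal (fun z => q1 (ol z)) H).
  assert (H2 := f_equal (fun z => q2 (ol z)) H).
  assert (H3 := f_equal (fun z => q3 (ol z)) H).
  assert (H4 := f_equal (fun z => q0 (or z)) H).
  assert (H5 := f_equal (fun z => q1 (or z)) H).
  assert (H6 := f_equal (fun z => q2 (or z)) H).
  assert (H7 := f_equal (fun z => q3 (or z)) H).
  clear H. ounf; pr.
  assert (Hb : a*b = 0) by lra. assert (Hc : a*c = 0) by lra. assert (Hd : a*d = 0) by lra.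
  assert (He : a*e = 0) by lra. assert (Hf : a*f = 0) by lra. assert (Hg : a*g = 0) by lra.
  assert (Hh : a*h = 0) by lra.
  assert (a * a * (a * a + 1) = 0).
  { replace (a*a+1) with (b*b+c*c+d*d+e*e+f*f+g*g+h*h) by lra.
    replace (a*a*(b*b+c*c+d*d+e*e+f*f+g*g+h*h)) with
      ((a*b)*(a*b)+(a*c)*(a*c)+(a*d)*(a*d)+(a*e)*(a*e)+(a*f)*(a*f)+(a*g)*(a*g)+(a*h)*(a*h)) by ring.
    rewrite Hb, Hc, Hd, He, Hf, Hg, Hh. ring. }
  assert (a = 0) by nra. subst. split; [reflexivity| lra].
Qed.


Definition has_form (f : oct -> oct) (P Q : R -> R -> oct) : Prop :=
  forall y, f y = oadd (P (oRe y) (onorm2 (oIm y))) (omul (oIm y) (Q (oRe y) (onorm2 (oIm y)))).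

Lemma form_ext f P Q P' Q' : has_form f P Q -> (forall a t, P a t = P' a t) ->
  (forall a t, Q a t = Q' a t) -> has_form f P' Q'.
Proof. intros H HP HQ y. rewrite H, HP, HQ. reflexivity. Qed.

Lemma stem_of_form f P Q : has_form f P Q -> forall al be,
  stem_of f al be = (P al (be*be), oscal be (Q al (be*be))).
Proof.
  intros H al be. unfold stem_of. rewrite !H.
  replace (oRe (oadd (oR al) (oscal be e1))) with al by (ounf; ring).
  replace (oRe (osub (oR al) (oscal be e1))) with al by (ounf; ring).
  replace (oIm (oadd (oR al) (oscal be e1))) with (oscal be e1) by octr.
  replace (oIm (osub (oR al) (oscal be e1))) with (oscal (-be) e1) by octr.
  replace (onorm2 (oscal be e1)) with (be*be) by (ounf; ring).
  replace (onorm2 (oscal (-be) e1)) with (be*be) by (ounf; ring).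
  f_equal; apply oct_ext; ounf; field.
Qed.

Lemma induced_form F P Q :
  (forall al be, 0 <= be -> F al be = (P al (be*be), oscal be (Q al (be*be)))) ->
  has_form (induced F) P Q.
Proof.
  intros H y. unfold induced. rewrite H by apply sqrt_pos. cbn [fst snd].
  unfold onorm. rewrite sqrt_sqrt by apply onorm2_nonneg. f_equal.
  rewrite omul_scall, omul_scalr, oscal_oscal.
  destruct (Req_dec (sqrt (onorm2 (oIm y))) 0) as [h|h].
  - assert (h2 : onorm2 (oIm y) = 0).
    { apply sqrt_eq_0; [apply onorm2_nonneg| exact h]. }
    apply onorm2_0 in h2. rewrite h2, omul_0l, oscal_0. reflexivity.
  - rewrite Rinv_l by exact h. apply oscal_1.
Qed.

Lemma slice_mul_form f g P1 Q1 P2 Q2 : has_form f P1 Q1 -> has_form g P2 Q2 ->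
  has_form (slice_mul f g)
    (fun a t => osub (omul (P1 a t) (P2 a t)) (oscal t (omul (Q1 a t) (Q2 a t))))
    (fun a t => oadd (omul (P1 a t) (Q2 a t)) (omul (Q1 a t) (P2 a t))).
Proof.
  intros Hf Hg. unfold slice_mul. apply induced_form. intros al be _.
  unfold stem_mul. rewrite (stem_of_form f _ _ Hf), (stem_of_form g _ _ Hg).
  f_equal; octr.
Qed.

Lemma slice_conj_form f P Q : has_form f P Q ->
  has_form (slice_conj f) (fun a t => oconj (P a t)) (fun a t => oconj (Q a t)).
Proof.
  intros Hf. unfold slice_conj. apply induced_form. intros al be _.
  unfold stem_conj. rewrite (stem_of_form f _ _ Hf).
  f_equal; octr.
Qed.

Lemma g_form I xi : oRe I = 0 -> has_form (gIxi I xi)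
  (fun a t => oR (a*a + t - 2*a*odot xi oone + onorm2 xi)) (fun _ _ => oscal (2 * odot xi I) I).
Proof.
  intros H y. unfold gIxi, projI.
  generalize (odot xi oone) (odot xi I) (onorm2 xi); intros u v m.
  destruct I as [[i0 i1 i2 i3] [i4 i5 i6 i7]]. ounf. subst.
  apply oct_ext; ounf; ring.
Qed.

Lemma h_form xi a : has_form (hxia xi a) (fun al _ => omul (osub (oconj xi) (oR al)) a) (fun _ _ => a).
Proof. intro y. unfold hxia. octr. Qed.


Ltac dist := repeat progress rewrite ?omul_addl, ?omul_addr, ?omul_subl, ?omul_subr,
  ?omul_oppl, ?omul_oppr, ?omul_scall, ?omul_scalr, ?omul_oRl, ?omul_oRr, ?omul_0l, ?omul_0r,
  ?oconj_add, ?oconj_sub, ?oconj_opp, ?oconj_scal, ?oconj_oR.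
Ltac atoms := repeat match goal with |- context [omul ?p ?q] =>
  let z := fresh "z" in set (z := omul p q) in *; clearbody z end.

Lemma projI_norm I xi : oRe I = 0 -> onorm2 I = 1 ->
  onorm2 (projI I xi) = odot xi oone * odot xi oone + odot xi I * odot xi I.
Proof.
  intros H0 H1. unfold projI. generalize (odot xi oone) (odot xi I); intros u v.
  assert (E : onorm2 (oadd (oR u) (oscal v I)) = u*u + 2*u*v*oRe I + v*v*onorm2 I) by (ounf; ring).
  rewrite E, H0, H1. ring.
Qed.

Definition cfun xi a t := a*a + t - 2*a*odot xi oone + onorm2 xi.

Lemma QI_eq I x xi b : osph I ->
  QI I x xi b = oadd (oscal (cfun xi (oRe x) (onorm2 (oIm x)) * cfun xi (oRe x) (onorm2 (oIm x))
                              + 4 * odot xi I * odot xi I * onorm2 (oIm x)) b)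
                     (oscal (-4 * cfun xi (oRe x) (onorm2 (oIm x)) * odot xi I) (omul (oIm x) (omul I b))).
Proof.
  intros HI. destruct (osph_props I HI) as [HI0 HI1].
  cbv beta zeta delta [QI].
  rewrite (projI_norm I xi HI0 HI1), (onorm2_decomp x), (oconj_decomp x).
  unfold projI, cfun.
  set (u := odot xi oone) in *. set (v := odot xi I) in *. set (m := onorm2 xi) in *.
  pose proof (x_decomp x) as Hx. pose proof (oRe_oIm x) as HX0.
  pose proof (imag_sq _ HX0) as HXX. pose proof (conj_im I HI0) as HcI. unfold osph in HI.
  set (al := oRe x) in *. set (X := oIm x) in *. set (t := onorm2 X) in *.
  clearbody al X t u v m. subst x.
  dist. rewrite ?HXX, ?HI, ?HcI. dist. rewrite ?HXX, ?HI, ?HcI. dist.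
  atoms. apply oct_ext; ounf; ring.
Qed.

Lemma Delta_norm e x : onorm2 (Defs.Delta e x) =
  (oRe x * oRe x - onorm2 (oIm x) - 2 * oRe e * oRe x + onorm2 e)^2
  + (2 * oRe x - 2 * oRe e)^2 * onorm2 (oIm x).
Proof. unfold Defs.Delta. generalize (oRe e) (onorm2 e); intros r s. ounf. ring. Qed.

Lemma perp_gen I xi u v : onorm2 (osub xi (oadd (oR u) (oscal v I))) =
  onorm2 xi - 2*u*odot xi oone - 2*v*odot xi I + u*u + 2*u*v*oRe I + v*v*onorm2 I.
Proof. ounf; ring. Qed.

Lemma perp_norm I xi : oRe I = 0 -> onorm2 I = 1 ->
  onorm2 (projIperp I xi) = onorm2 xi - odot xi oone * odot xi oone - odot xi I * odot xi I.
Proof. intros H0 H1. unfold projIperp, projI. rewrite perp_gen, H0, H1. ring. Qed.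

Lemma projI_re I xi : oRe I = 0 -> oRe (projI I xi) = odot xi oone.
Proof. intros H0. unfold projI. generalize (odot xi oone) (odot xi I); intros u v.
  assert (E : oRe (oadd (oR u) (oscal v I)) = u + v * oRe I) by (ounf; ring). rewrite E, H0; ring. Qed.

Lemma NI_eq I x xi : osph I -> NI I x xi =
  cfun xi (oRe x) (onorm2 (oIm x)) * cfun xi (oRe x) (onorm2 (oIm x))
  - 4 * odot xi I * odot xi I * onorm2 (oIm x).
Proof.
  intros HI. destruct (osph_props I HI) as [HI0 HI1].
  cbv beta zeta delta [NI].
  rewrite Delta_norm, (projI_re I xi HI0), (projI_norm I xi HI0 HI1), (perp_norm I xi HI0 HI1),
    (onorm2_decomp x).
  unfold cfun. ring.
Qed.

Definition Nfun xi I al t := cfun xi al t * cfun xi al t - 4 * odot xi I * odot xi I * t.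

Lemma oinvsq_oR n : oinvsq (oR n) = oR (/(n*n)).
Proof.
  unfold oinvsq, oinv. destruct (Req_dec n 0) as [h|h].
  - subst. replace (/(0*0)) with 0 by (rewrite Rmult_0_l; symmetry; apply Rinv_0).
    apply oct_ext; ounf; ring.
  - apply oct_ext; ounf; field; exact h.
Qed.

Lemma kernel_eq I xi a x : osph I ->
  kernel I xi a x = oscal (/(2*PI^2*NI I x xi ^2)) (MI I x xi a).
Proof.
  intros HI. destruct (osph_props I HI) as [HI0 HI1].
  pose proof (conj_im I HI0) as HcI.
  pose proof (g_form I xi HI0) as Hg.
  pose proof (slice_conj_form _ _ _ Hg) as Hgc.
  pose proof (slice_mul_form _ _ _ _ _ _ Hg Hgc) as HN.
  assert (HR : has_form (fun y => oinvsq (sliceN (gIxi I xi) y))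
                 (fun al t => oR (/(Nfun xi I al t * Nfun xi I al t))) (fun _ _ => ozero)).
  { intro y. cbv beta. unfold sliceN. rewrite HN. cbv beta.
    rewrite omul_0r, oadd_0, <- oinvsq_oR. f_equal.
    set (al := oRe y). set (t := onorm2 (oIm y)). clearbody al t.
    assert (EQ : oadd (omul (oR (al * al + t - 2 * al * odot xi oone + onorm2 xi))
                   (oconj (oscal (2 * odot xi I) I)))
                 (omul (oscal (2 * odot xi I) I) (oconj (oR (al * al + t - 2 * al * odot xi oone + onorm2 xi))))
                 = ozero).
    { dist. rewrite HcI. dist. apply oct_ext; ounf; ring. }
    rewrite EQ, omul_0r, oadd_0. unfold Nfun, cfun.
    dist. rewrite HcI. dist. unfold osph in HI. rewrite HI.
    apply oct_ext; ounf; ring. }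
  pose proof (slice_mul_form _ _ _ _ _ _ Hgc Hgc) as Hgc2.
  pose proof (h_form xi a) as Hh.
  pose proof (slice_mul_form _ _ _ _ _ _ Hgc2 Hh) as HG.
  pose proof (slice_mul_form _ _ _ _ _ _ HR HG) as HK.
  unfold kernel. cbv zeta. rewrite HK. cbv beta.
  rewrite (NI_eq I x xi HI). unfold MI. rewrite !(QI_eq I x xi _ HI). rewrite (oconj_decomp x).
  replace (/ (2 * PI ^ 2 * (cfun xi (oRe x) (onorm2 (oIm x)) * cfun xi (oRe x) (onorm2 (oIm x))
     - 4 * odot xi I * odot xi I * onorm2 (oIm x)) ^ 2))
   with (/(2*PI^2) * /(Nfun xi I (oRe x) (onorm2 (oIm x)) * Nfun xi I (oRe x) (onorm2 (oIm x))))
   by (rewrite <- Rinv_mult; f_equal; unfold Nfun; ring).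
  pose proof (oRe_oIm x) as HX0.
  pose proof (imag_sq _ HX0) as HXX. unfold osph in HI.
  set (N := Nfun xi I (oRe x) (onorm2 (oIm x))) in *.
  unfold cfun.
  set (al := oRe x) in *. set (X := oIm x) in *. set (t := onorm2 X) in *.
  clearbody N al X t.
  dist. rewrite ?HXX, ?HI, ?HcI. dist. rewrite ?alt_l, ?HXX, ?HI, ?HcI. dist.
  rewrite ?alt_l, ?HXX, ?HI, ?HcI. dist.
  clear Hg Hgc HN HR Hgc2 Hh HG HK HXX HcI HI HI0 HI1 HX0.
  set (u := odot xi oone). set (v := odot xi I). set (m := onorm2 xi). set (P := / (2 * PI ^ 2)).
  clearbody u v m P.
  atoms. apply oct_ext; ounf; ring.
Qed.

Lemma norm_CI I u v : onorm2 (oadd (oR u) (oscal v I)) = u*u + 2*u*v*oRe I + v*v*onorm2 I.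
Proof. ounf; ring. Qed.
Lemma sub0 y z : osub y z = ozero -> y = z.
Proof.
  intro H.
  assert (H0 := f_equal (fun w => q0 (ol w)) H). assert (H1 := f_equal (fun w => q1 (ol w)) H).
  assert (H2 := f_equal (fun w => q2 (ol w)) H). assert (H3 := f_equal (fun w => q3 (ol w)) H).
  assert (H4 := f_equal (fun w => q0 (or w)) H). assert (H5 := f_equal (fun w => q1 (or w)) H).
  assert (H6 := f_equal (fun w => q2 (or w)) H). assert (H7 := f_equal (fun w => q3 (or w)) H).
  clear H. apply oct_ext; ounf; lra.
Qed.
Lemma re_u xi : oRe xi = odot xi oone. Proof. ounf; ring. Qed.
Lemma re_sph s r K : oRe (oadd (oR s) (oscal r K)) = s + r * oRe K. Proof. ounf; ring. Qed.
Lemma im_sph s r K : onorm2 (oIm (oadd (oR s) (oscal r K))) = r*r*(onorm2 K - oRe K * oRe K).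
Proof. ounf; ring. Qed.
Lemma odot_CI1 a b I : odot (oadd (oR a) (oscal b I)) oone = a + b * oRe I. Proof. ounf; ring. Qed.
Lemma odot_CI2 a b I : odot (oadd (oR a) (oscal b I)) I = a * oRe I + b * onorm2 I. Proof. ounf; ring. Qed.

Lemma NI_zero I x xi : osph I -> (NI I x xi = 0 <-> GammaI I x xi).
Proof.
  intros HI. destruct (osph_props I HI) as [HI0 HI1].
  rewrite (NI_eq I x xi HI). unfold cfun.
  pose proof (perp_norm I xi HI0 HI1) as Hp.
  pose proof (onorm2_nonneg (projIperp I xi)) as hp.
  pose proof (onorm2_nonneg (oIm x)) as ht.
  pose proof (onorm2_decomp xi) as Hm. rewrite re_u in Hm.
  split.
  - intro H.
    remember (odot xi oone) as u eqn:Hu. remember (odot xi I) as v eqn:Hv.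
    remember (onorm2 xi) as m eqn:Hmm. remember (oRe x) as al eqn:Hal'.
    remember (onorm2 (oIm x)) as t eqn:Htt. remember (onorm2 (projIperp I xi)) as p eqn:Hpp.
    assert (Hd : 0 <= (al - u) * (al - u) + p) by (pose proof (Rle_0_sqr (al - u)); unfold Rsqr in *; lra).
    assert (E : ((al - u) * (al - u) + p)*((al - u) * (al - u) + p)
               + 2*((al - u) * (al - u) + p)*(t + v*v) + (t - v*v)*(t - v*v) = 0).
    { rewrite <- H. rewrite Hp. ring. }
    assert (Hvv : 0 <= t + v*v) by (pose proof (Rle_0_sqr v); unfold Rsqr in *; lra).
    pose proof (Rle_0_sqr ((al - u) * (al - u) + p)) as S1.
    pose proof (Rmult_le_pos _ _ Hd Hvv) as S2.
    pose proof (Rle_0_sqr (t - v*v)) as S3. unfold Rsqr in *.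
    assert (Et : (t - v*v)*(t - v*v) = 0) by lra.
    assert (Ht : t = v*v).
    { apply Rmult_integral in Et. destruct Et; lra. }
    assert (Hd0 : (al - u) * (al - u) + p = 0).
    { assert (Ed : ((al - u) * (al - u) + p)*((al - u) * (al - u) + p) = 0) by lra.
      apply Rmult_integral in Ed. destruct Ed; lra. }
    pose proof (Rle_0_sqr (al - u)) as S4. unfold Rsqr in S4.
    assert (Hp0 : p = 0) by lra.
    assert (Hal : al = u).
    { assert (Ea : (al - u) * (al - u) = 0) by lra. apply Rmult_integral in Ea. destruct Ea; lra. }
    assert (Hxi : xi = oadd (oR u) (oscal v I)).
    { apply sub0. apply onorm2_0. rewrite Hu, Hv. unfold projIperp, projI in Hpp. rewrite <- Hpp. exact Hp0. }
    split.
    + exists u, v. exact Hxi.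
    + assert (Hr : onorm (oIm xi) = Rabs v).
      { unfold onorm. replace (onorm2 (oIm xi)) with (Rsqr v).
        - apply sqrt_Rsqr_abs.
        - unfold Rsqr. lra. }
      unfold Ssph. rewrite Hr, re_u, <- Hu.
      destruct (Req_dec v 0) as [hv|hv].
      * exists I. split; [exact HI|].
        assert (HX : oIm x = ozero) by (apply onorm2_0; rewrite <- Htt, Ht, hv; ring).
        rewrite (x_decomp x), HX, <- Hal', Hal, hv, Rabs_R0. octr.
      * exists (oscal (/ Rabs v) (oIm x)). split.
        -- unfold osph. rewrite omul_scall, omul_scalr, imag_sq by apply oRe_oIm.
           rewrite <- Htt, Ht. assert (Hav : Rabs v <> 0) by (apply Rabs_no_R0; exact hv).
           assert (Hvv2 : v * v = Rabs v * Rabs v) by (rewrite <- Rabs_mult; symmetry; apply Rabs_right; pose proof (Rle_0_sqr v); unfold Rsqr in *; lra).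
           rewrite Hvv2. apply oct_ext; ounf; field; exact Hav.
        -- rewrite oscal_oscal, Rinv_r by (apply Rabs_no_R0; exact hv).
           rewrite oscal_1. rewrite (x_decomp x) at 1. rewrite <- Hal', Hal. reflexivity.
  - intros [[a0 [b0 Hxi]] [K [HK Hx]]].
    destruct (osph_props K HK) as [HK0 HK1].
    assert (Hu : odot xi oone = a0) by (rewrite Hxi, odot_CI1, HI0; ring).
    assert (Hv : odot xi I = b0) by (rewrite Hxi, odot_CI2, HI0, HI1; ring).
    assert (Hm2 : onorm2 xi = a0*a0 + b0*b0) by (rewrite Hxi, norm_CI, HI0, HI1; ring).
    assert (Hal : oRe x = odot xi oone) by (rewrite Hx, re_sph, HK0, re_u; ring).
    assert (Ht : onorm2 (oIm x) = b0 * b0).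
    { rewrite Hx, im_sph, HK0, HK1. unfold onorm.
      rewrite sqrt_sqrt by apply onorm2_nonneg. rewrite Hu, Hm2 in Hm. lra. }
    rewrite Hal, Ht, Hu, Hv, Hm2. ring.
Qed.

Theorem lemma2p18 (D : R -> R -> Prop) (f : oct -> oct) (I J : oct) (n : oct -> oct) :
  open_R2 D -> (exists a b, D a b) -> (forall a b, D a b -> D a (- b)) ->
  connected_O (OmegaD D) ->
  bounded_R2 D -> C1_boundary_R2 D ->
  slice_on D f -> C1_on (OmegaD D) f ->
  Npairs I J ->
  outer_unit_normal D I J n ->
  (forall x xi, NI I x xi = 0 <-> GammaI I x xi) /\
  (forall x xi, boundaryI D I J xi -> ~ GammaI I x xi ->
     SfI I n f x xi =
     oscal (/ (2 * PI ^ 2 * NI I x xi ^ 2)) (MI I x xi (omul (n xi) (f xi)))) /\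
  (forall x xi, OmegaI D I J xi -> ~ GammaI I x xi ->
     VfI I J f x xi =
     oscal (/ (2 * PI ^ 2 * NI I x xi ^ 2)) (MI I x xi (DbarI I J f xi))).
Proof.
  intros _ _ _ _ _ _ _ _ [HI _] _.
  split; [intros x xi; apply NI_zero; exact HI|].
  split; intros x xi _ _; [unfold SfI | unfold VfI]; apply kernel_eq; exact HI.
Qed.
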